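(* Consider algorithm naive-fvs with step 4 replaced by the modified step 4'. For every graph $G$ and integer $k$, every execution path of this algorithm started on $(G,k,\emptyset)$ that leads to a solution satisfies $|F'|\le 2|V_-|$.
   Context: All graphs are finite, simple and undirected; $d_G(v)$ denotes the degree of $v$ in $G$, $G-S$ denotes deletion of a vertex set $S$, and $G[S]$ the induced subgraph. A feedback vertex set of $G$ is a set $V_-\subseteq V(G)$ such that $G-V_-$ is a forest. Algorithm naive-fvs$(G,k,F)$ (with $k$ an integer and $F\subseteq V(G)$ inducing a forest) returns a set of vertices or ``NO'' as follows (all choices among several candidates are arbitrary; degrees are in the current graph $G$): (0) If $k<0$ return NO; if $V(G)=\emptyset$ return $\emptyset$. (1) If some vertex $v$ has degree less than $2$, return naive-fvs$(G-\{v\},k,F\setminus\{v\})$. (2) If some $v\in V(G)\setminus F$ has two neighbors in the same connected component of $G[F]$, let $X=$ naive-fvs$(G-\{v\},k-1,F)$ and return $X\cup\{v\}$ (NO if $X$ is NO). (3) Pick $v\in V(G)\setminus F$ of maximum degree. (4) If $d(v)=2$: set $X=\emptyset$; while $G$ contains a cycle $C$, take any vertex $x$ of $C$ not in $F$, add $x$ to $X$ and delete $x$ from $G$; then return $X$ if $|X|\le k$, else NO. (5) Let $X=$ naive-fvs$(G-\{v\},k-1,F)$; if $X$ is not NO, return $X\cup\{v\}$. (6) Return naive-fvs$(G,k,F\cup\{v\})$. The modified step 4 is: (4') If $d(v)\le 3$, compute a minimum-size set $X\subseteq V(G)\setminus F$ such that $G-X$ is a forest, and return $X$ if $|X|\le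 k$, else NO. An execution path is a sequence of calls $c_0,c_1,\dots,c_t$ where $c_0$ is the call on $(G,k,\emptyset)$; for each $j<t$, $c_{j+1}$ is the recursive call made by $c_j$ in step 1 or step 2, or, if $c_j$ reaches step 5, either the call of step 5 or the call of step 6 (the latter considered even if the algorithm would not actually make it); and $c_t$ terminates in step 0 or step 4' without recursion. It leads to a solution if $c_t$ returns a set (not NO). $V_-$ denotes the set of vertices deleted along the path in step 2, in step 5 (when the path follows the step-5 call), together with the set $X$ returned in step 4' of $c_t$ (if $c_t$ ends there); $F'$ denotes the set of vertices added to $F$ by step 6 (when the path follows the step-6 call). *)

(* Defs.v *)
From HB Require Import structures.
From mathcomp Require Import all_boot all_order all_algebra.
Set Implicit Arguments. Unset Strict Implicit. Unset Printing Implicit Defensive.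
Import Order.TTheory GRing.Theory Num.Theory.

(* The "current graph" of a call is
   the induced subgraph G[V] for a vertex set V : {set T}; deleting vertices
   means removing them from V. *)

Definition deg (T : finType) (e : rel T) (V : {set T}) (v : T) : nat :=
  #|[set u in V | e v u]|.

Definition has_cycle (T : finType) (e : rel T) (S : {set T}) : Prop :=
  exists c : seq T, [/\ uniq c, 3 <= size c, all (fun x => x \in S) c & cycle e c].

Definition forest (T : finType) (e : rel T) (S : {set T}) : Prop :=
  ~ has_cycle e S.

Definition adjF (T : finType) (e : rel T) (V F : {set T}) : rel T :=
  fun x y => [&& x \in V :&: F, y \in V :&: F & e x y].

Definition two_nbrs_same_comp (T : finType) (e : rel T) (V F : {set T}) (v : T)
  : Prop :=
  exists u w, [/\ u != w, u \in V :&: F, w \in V :&: F &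
                 [/\ e v u, e v w & connect (adjF e V F) u w]].

(* Neither step 0, 1 nor 2 applies and v is a step-3 choice (maximum degree
   vertex of V \ F). *)
Definition reaches_step3 (T : finType) (e : rel T) (V : {set T}) (k : int)
  (F : {set T}) (v : T) : Prop :=
  [/\ (0 <= k)%R, V != set0,
      (forall u, u \in V -> 2 <= deg e V u) &
    [/\
      (forall u, u \in V :\: F -> ~ two_nbrs_same_comp e V F u),
      v \in V :\: F &
      (forall u, u \in V :\: F -> deg e V u <= deg e V v)]].

(* exec_sol e V k F Vm Fp : there is an execution path of naive-fvs with
   modified step 4', starting with the call on (G[V], k, F), that leads to a
   solution, along which the set V_- is Vm and the set F' is Fp. *)
Inductive exec_sol (T : finType) (e : rel T) :
  {set T} -> int -> {set T} -> {set T} -> {set T} -> Prop :=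
| ES_step0 V k F :
    (0 <= k)%R -> V = set0 -> exec_sol e V k F set0 set0
| ES_step1 V k F v Vm Fp :
    (0 <= k)%R -> V != set0 -> v \in V -> deg e V v < 2 ->
    exec_sol e (V :\ v) k (F :\ v) Vm Fp ->
    exec_sol e V k F Vm Fp
| ES_step2 V k F v Vm Fp :
    (0 <= k)%R -> V != set0 -> (forall u, u \in V -> 2 <= deg e V u) ->
    v \in V :\: F -> two_nbrs_same_comp e V F v ->
    exec_sol e (V :\ v) (k - 1)%R F Vm Fp ->
    exec_sol e V k F (v |: Vm) Fp
| ES_step4 V k F v (X : {set T}) :
    reaches_step3 e V k F v -> deg e V v <= 3 ->
    X \subset V :\: F -> forest e (V :\: X) ->
    (forall Y : {set T}, Y \subset V :\: F -> forest e (V :\: Y) -> #|X| <= #|Y|) ->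
    (#|X|%:Z <= k)%R ->
    exec_sol e V k F X set0
| ES_step5 V k F v Vm Fp :
    reaches_step3 e V k F v -> 3 < deg e V v ->
    exec_sol e (V :\ v) (k - 1)%R F Vm Fp ->
    exec_sol e V k F (v |: Vm) Fp
| ES_step6 V k F v Vm Fp :
    reaches_step3 e V k F v -> 3 < deg e V v ->
    exec_sol e V k (v |: F) Vm Fp ->
    exec_sol e V k F Vm (v |: Fp).

(* Main.v *)
Require Import Defs.
From HB Require Import structures.
From mathcomp Require Import all_boot all_order all_algebra.
From mathcomp Require Import zify.
Set Implicit Arguments. Unset Strict Implicit.

Lemma degE (T : finType) (e : rel T) (V : {set T}) v : deg e V v = \sum_(u in V) (e v u : nat).
Proof.
rewrite /deg -sum1dep_card big_mkcondr /=; apply: eq_bigr => u _; by case: (e v u).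
Qed.

Lemma deg_sub (T : finType) (e : rel T) (V1 V2 : {set T}) v :
  V1 \subset V2 -> deg e V1 v <= deg e V2 v.
Proof.
move=> sV; apply: subset_leq_card; apply/subsetP => u; rewrite !inE => /andP[uV ->].
by rewrite (subsetP sV).
Qed.

Lemma deg_setD1 (T : finType) (e : rel T) (V : {set T}) v u : v \in V ->
  deg e V u = e u v + deg e (V :\ v) u.
Proof.
move=> vV; rewrite !degE (bigD1 v) //=; congr (_ + _).
by apply: eq_bigl => w; rewrite in_setD1 andbC.
Qed.

Definition term (T : finType) (e : rel T) (V F : {set T}) u :=
  if u \in F then deg e V u else minn (deg e V u) 2.
Definition H (T : finType) (e : rel T) (V F : {set T}) :=
  \sum_(u in V) term e V F u.

Lemma H_del (T : finType) (e : rel T) (e_sym : symmetric e)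
  (V F F2 : {set T}) v : v \in V -> {in V :\ v, forall u, (u \in F2) = (u \in F)} ->
  H e V F <= term e V F v + deg e V v + H e (V :\ v) F2.
Proof.
move=> vV hF; rewrite /H (bigD1 v) //= -addnA leq_add2l.
have -> : \sum_(i in V | i != v) term e V F i = \sum_(i in V :\ v) term e V F i.
  by apply: eq_bigl => w; rewrite in_setD1 andbC.
apply: (@leq_trans (\sum_(i in V :\ v) (e v i + term e (V :\ v) F2 i))).
  apply: leq_sum => u uV; rewrite /term hF // (deg_setD1 e u vV) (e_sym v u).
  case: (u \in F); lia.
rewrite big_split /= leq_add2r -degE; exact: deg_sub (subsetDl _ _).
Qed.

Lemma H_step6 (T : finType) (e : rel T) (V F : {set T}) v :
  v \in V -> v \notin F -> 2 <= deg e V v ->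
  H e V (v |: F) + 2 = H e V F + deg e V v.
Proof.
move=> vV vF d2; rewrite /H (bigD1 v) //= [in RHS](bigD1 v) //= /term.
rewrite setU11 (negbTE vF).
have -> : \sum_(i in V | i != v) (if i \in v |: F then deg e V i else minn (deg e V i) 2)
  = \sum_(i in V | i != v) (if i \in F then deg e V i else minn (deg e V i) 2).
  by apply: eq_bigr => i /andP[_ iv]; rewrite in_setU1 (negbTE iv).
lia.
Qed.

Lemma H_ge (T : finType) (e : rel T) (V F : {set T}) :
  (forall u, u \in V -> 2 <= deg e V u) -> 2 * #|V| <= H e V F.
Proof.
move=> h; rewrite mulnC -sum_nat_const /H; apply: leq_sum => u uV.
have := h u uV; rewrite /term; case: (u \in F); lia.
Qed.

Lemma H_set0 (T : finType) (e : rel T) (V : {set T}) : H e V set0 <= 2 * #|V|.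
Proof.
rewrite mulnC -sum_nat_const /H; apply: leq_sum => u uV.
rewrite /term inE; lia.
Qed.

Lemma H_le_deg (T : finType) (e : rel T) (V F : {set T}) :
  H e V F <= \sum_(u in V) deg e V u.
Proof. apply: leq_sum => u _; rewrite /term; case: (u \in F); lia. Qed.

Lemma size_le_card (T : finType) (S : {set T}) (s : seq T) :
  uniq s -> all (fun x => x \in S) s -> size s <= #|S|.
Proof.
move=> us /allP aS; rewrite -(card_uniqP us); apply: subset_leq_card.
by apply/subsetP => x /aS.
Qed.

Lemma mindeg_cycle (T : finType) (e : rel T) (e_sym : symmetric e) (e_irr : irreflexive e)
  (S : {set T}) x0 : x0 \in S -> (forall u, u \in S -> 2 <= deg e S u) -> has_cycle e S.
Proof.
move=> x0S hdeg.
suff: forall n x (p : seq T), #|S| < n + size (x :: p) -> uniq (x :: p) ->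
  all (fun z => z \in S) (x :: p) -> path e x p -> has_cycle e S.
  by move=> /(_ #|S| x0 [::]); apply => //=; [lia | rewrite x0S].
elim=> [|n IH] x p.
  by move=> lt u a _; have := size_le_card u a; move: lt => /=; lia.
move=> lt u a pa.
set A := [set y in S | e x y].
have xS : x \in S by move: a => /= /andP[].
have A2 : 2 <= #|A| by exact: hdeg.
case: (pickP (fun y => (y \in A) && (y \notin x :: p))) => [y /andP[yA ynp] | hno].
  move: yA; rewrite inE => /andP[yS exy].
  apply: (IH y (x :: p)) => //=.
  - move: lt => /=; lia.
  - by rewrite -/(uniq (x :: p)) u andbT; move: ynp; rewrite /= .
  - by rewrite yS; exact: a.
  - by rewrite e_sym exy.
have sub : forall y, y \in A -> y \in p.
  move=> y yA; have := hno y; rewrite yA /= in_cons => /negbFE /orP[/eqP yx|//].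
  by move: yA; rewrite yx inE e_irr andbF.
clear hno; case: p lt u a pa sub => [|h p'] lt u a pa sub.
  by move: A2; case: (set_0Vmem A) => [->|[y /sub]]; rewrite ?cards0.
have : 0 < #|A :\ h| by move: A2; rewrite (cardsD1 h A); case: (h \in A); lia.
rewrite card_gt0 => /set0Pn [w]; rewrite in_setD1 => /andP[wh wA].
have wp : w \in p' by have := sub w wA; rewrite in_cons (negbTE wh).
move: u a pa; case/path.splitP: wp => p1 p2 u a pa.
move: wA; rewrite inE => /andP[wS exw].
have e1 : [:: x, h & rcons p1 w ++ p2] = [:: x, h & rcons p1 w] ++ p2 by [].
have e2 : h :: (rcons p1 w ++ p2) = (h :: rcons p1 w) ++ p2 by [].
exists (x :: h :: rcons p1 w); split.
- by move: u; rewrite e1 cat_uniq => /andP[].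
- by rewrite /= size_rcons.
- by move: a; rewrite e1 all_cat => /andP[].
- rewrite /cycle /= rcons_path.
  have lw : last h (rcons p1 w) = w by apply: last_rcons.
  rewrite lw (e_sym w x) exw andbT.
  by move: pa; rewrite e2 cat_path => /andP[/= /andP[-> ->] _].
Qed.

Lemma forest_sub (T : finType) (e : rel T) (Y Z : {set T}) :
  Y \subset Z -> forest e Z -> forest e Y.
Proof.
move=> sYZ fZ [c [u s a cy]]; apply: fZ; exists c; split => //.
by apply/allP => x /(allP a) /(subsetP sYZ).
Qed.

Lemma forest_sum (T : finType) (e : rel T) (e_sym : symmetric e) (e_irr : irreflexive e)
  (Y : {set T}) : forest e Y -> \sum_(u in Y) deg e Y u <= 2 * #|Y|.
Proof.
move: {2}#|Y| (leqnn #|Y|) => n; elim: n Y => [|n IH] Y.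
  rewrite leqn0 cards_eq0 => /eqP -> _; by rewrite big_set0.
move=> cY fY.
case: (pickP (fun y => (y \in Y) && (deg e Y y < 2))) => [y /andP[yY dy] | hno]; last first.
  case: (set_0Vmem Y) => [->|[x xY]]; first by rewrite big_set0.
  exfalso; apply: fY; apply: (mindeg_cycle e_sym e_irr xY) => u uY.
  by have := hno u; rewrite uY /=; case: ltnP.
rewrite (bigD1 y) //=.
have -> : \sum_(i in Y | i != y) deg e Y i = \sum_(i in Y :\ y) deg e Y i.
  by apply: eq_bigl => w; rewrite in_setD1 andbC.
have -> : \sum_(i in Y :\ y) deg e Y i = \sum_(i in Y :\ y) (e y i + deg e (Y :\ y) i).
  by apply: eq_bigr => i _; rewrite (deg_setD1 e i yY) (e_sym i y).
rewrite big_split /= -degE.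
have h1 : deg e (Y :\ y) y <= deg e Y y by apply: deg_sub; apply: subsetDl.
have h2 := IH (Y :\ y).
have cY' : #|Y| = 1 + #|Y :\ y| by rewrite (cardsD1 y Y) yY.
have := h2 ltac:(lia) (forest_sub (subsetDl _ _) fY); lia.
Qed.

Lemma terminal_sum (T : finType) (e : rel T) (e_sym : symmetric e) (e_irr : irreflexive e)
  (V X : {set T}) : X \subset V -> (forall x, x \in X -> deg e V x <= 3) ->
  forest e (V :\: X) -> \sum_(u in V) deg e V u <= 2 * #|V| + 4 * #|X|.
Proof.
move=> sXV hX fY.
have split_deg : forall u, deg e V u = deg e X u + deg e (V :\: X) u.
  by move=> u; rewrite !degE (big_setID X) /= (setIidPr sXV).
have cV : #|V| = #|X| + #|V :\: X|.
  by rewrite -(cardsID X V) (setIidPr sXV).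
rewrite (big_setID X) /= (setIidPr sXV).
have s1 : \sum_(u in X) deg e V u <= 3 * #|X|.
  rewrite mulnC -sum_nat_const; exact: leq_sum.
have s2 : \sum_(u in V :\: X) deg e V u =
   \sum_(u in V :\: X) deg e X u + \sum_(u in V :\: X) deg e (V :\: X) u.
  by rewrite -big_split /=; apply: eq_bigr => u _.
have s3 : \sum_(u in V :\: X) deg e X u = \sum_(x in X) deg e (V :\: X) x.
  under eq_bigr do rewrite degE.
  rewrite exchange_big /=; apply: eq_bigr => x _; rewrite degE.
  by apply: eq_bigr => u _; rewrite e_sym.
have s4 : \sum_(x in X) deg e (V :\: X) x <= \sum_(x in X) deg e V x.
  by apply: leq_sum => x _; apply: deg_sub; apply: subsetDl.
have s5 := forest_sum e_sym e_irr fY.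
lia.
Qed.
Lemma scale (a b f R m : nat) : 0 < a -> a <= b -> a * f + R <= 2 * a * m -> b * f + R <= 2 * b * m.
Proof.
move=> a0 ab h. rewrite -(leq_pmul2l a0).
have h1 : b * (a * f + R) <= b * (2 * a * m) by rewrite leq_mul2l h orbT.
have h2 : a * R <= b * R by rewrite leq_mul2r ab orbT.
nia.
Qed.

Lemma Vm_sub (T : finType) (e : rel T) V k F Vm Fp :
  exec_sol e V k F Vm Fp -> Vm \subset V.
Proof.
elim=> {V k F Vm Fp}.
- by move=> *; apply: sub0set.
- by move=> V k F v Vm Fp _ _ _ _ _ s; apply: (subset_trans s); apply: subsetDl.
- move=> V k F v Vm Fp _ _ _ vV _ _ s; rewrite subUset sub1set (subsetP (subsetDl V F) v vV).
  by apply: (subset_trans s); apply: subsetDl.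
- by move=> V k F v X _ _ s *; apply: (subset_trans s); apply: subsetDl.
- move=> V k F v Vm Fp [_ _ _ [_ vV _]] _ _ s; rewrite subUset sub1set (subsetP (subsetDl V F) v vV).
  by apply: (subset_trans s); apply: subsetDl.
- by [].
Qed.

Lemma mainA (T : finType) (e : rel T) (e_sym : symmetric e) (e_irr : irreflexive e)
  V k F Vm Fp : exec_sol e V k F Vm Fp -> forall W, 4 <= W ->
  (forall u, u \in V :\: F -> deg e V u <= W) ->
  (W - 2) * #|Fp| + H e V F <= 2 * (W - 2) * #|Vm| + 2 * #|V|.
Proof.
elim=> {V k F Vm Fp}.
- move=> V k F _ -> W _ _; rewrite /H big_set0 cards0; lia.
- move=> V k F v Vm Fp _ _ vV dv ex IH W W4 hW.
  have hyp : forall u, u \in (V :\ v) :\: (F :\ v) -> deg e (V :\ v) u <= W.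
    move=> u; rewrite !inE negb_and => /andP[hu /andP[uv uV]].
    have uF : u \notin F by move: hu; rewrite uv /=; case: (u \in F).
    apply: leq_trans (hW u _); first by apply: deg_sub; apply: subsetDl.
    by rewrite inE uF uV.
  have h := IH W W4 hyp.
  have hd := @H_del T e e_sym V F (F :\ v) v vV.
  have {hd} hd := hd ltac:(by move=> u; rewrite !inE => /andP[-> _]).
  have tv : term e V F v <= deg e V v by rewrite /term; case: (v \in F); lia.
  have cV : #|V| = 1 + #|V :\ v| by rewrite (cardsD1 v V) vV.
  lia.
- move=> V k F v Vm Fp _ _ hdeg vVF _ ex IH W W4 hW.
  have vV : v \in V by move: vVF; rewrite inE => /andP[].
  have vF : v \notin F by move: vVF; rewrite inE => /andP[].
  have hyp : forall u, u \in (V :\ v) :\: F -> deg e (V :\ v) u <= W.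
    move=> u; rewrite !inE => /andP[uF /andP[uv uV]].
    apply: leq_trans (hW u _); first by apply: deg_sub; apply: subsetDl.
    by rewrite inE uF uV.
  have h := IH W W4 hyp.
  have hd := @H_del T e e_sym V F F v vV (fun _ _ => erefl).
  have tv : term e V F v <= 2 by rewrite /term (negbTE vF); lia.
  have dv := hW v vVF.
  have cV : #|V| = 1 + #|V :\ v| by rewrite (cardsD1 v V) vV.
  have vVm : v \notin Vm by apply/negP => /(subsetP (Vm_sub ex)); rewrite setD11.
  have cVm : #|v |: Vm| = 1 + #|Vm| by rewrite cardsU1 vVm.
  rewrite cVm; nia.
- move=> V k F v X [_ _ hdeg [_ vVF hmax]] d3 sX fX _ _ W W4 hW.
  have sXV : X \subset V by apply: (subset_trans sX); apply: subsetDl.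
  have hX : forall x, x \in X -> deg e V x <= 3.
    by move=> x xX; apply: leq_trans (hmax x (subsetP sX x xX)) d3.
  have := terminal_sum e_sym e_irr sXV hX fX.
  have := H_le_deg e V F.
  rewrite cards0; nia.
- move=> V k F v Vm Fp [_ _ hdeg [_ vVF hmax]] d4 ex IH W W4 hW.
  have vV : v \in V by move: vVF; rewrite inE => /andP[].
  have vF : v \notin F by move: vVF; rewrite inE => /andP[].
  have hyp : forall u, u \in (V :\ v) :\: F -> deg e (V :\ v) u <= W.
    move=> u; rewrite !inE => /andP[uF /andP[uv uV]].
    apply: leq_trans (hW u _); first by apply: deg_sub; apply: subsetDl.
    by rewrite inE uF uV.
  have h := IH W W4 hyp.
  have hd := @H_del T e e_sym V F F v vV (fun _ _ => erefl).
  have tv : term e V F v <= 2 by rewrite /term (negbTE vF); lia.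
  have dv := hW v vVF.
  have cV : #|V| = 1 + #|V :\ v| by rewrite (cardsD1 v V) vV.
  have vVm : v \notin Vm by apply/negP => /(subsetP (Vm_sub ex)); rewrite setD11.
  have cVm : #|v |: Vm| = 1 + #|Vm| by rewrite cardsU1 vVm.
  rewrite cVm; nia.
- move=> V k F v Vm Fp [_ _ hdeg [_ vVF hmax]] d4 ex IH W W4 hW.
  have vV : v \in V by move: vVF; rewrite inE => /andP[].
  have vF : v \notin F by move: vVF; rewrite inE => /andP[].
  have hyp : forall u, u \in V :\: (v |: F) -> deg e V u <= deg e V v.
    move=> u; rewrite !inE negb_or => /andP[/andP[_ uF] uV].
    by apply: hmax; rewrite inE uF uV.
  have h := IH (deg e V v) d4 hyp.
  have h6 := @H_step6 T e V F v vV vF ltac:(lia).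
  have hge := @H_ge T e V F hdeg.
  have dv := hW v vVF.
  have cF : #|v |: Fp| <= 1 + #|Fp| by rewrite cardsU1; case: (v \notin Fp).
  have := @scale (deg e V v - 2) (W - 2) (#|Fp| + 1) (H e V F - 2 * #|V|) #|Vm|.
  have m1 : (W - 2) * #|v |: Fp| <= (W - 2) * (#|Fp| + 1) by rewrite leq_mul2l; lia.
  move=> sc; have {}sc := sc ltac:(lia) ltac:(lia) ltac:(nia).
  lia.
Qed.

Lemma mainB (T : finType) (e : rel T) (e_sym : symmetric e) (e_irr : irreflexive e)
  V k F Vm Fp : exec_sol e V k F Vm Fp -> F = set0 -> #|Fp| <= 2 * #|Vm|.
Proof.
elim=> {V k F Vm Fp}.
- by move=> *; rewrite cards0.
- move=> V k F v Vm Fp _ _ _ _ _ IH F0; apply: IH; rewrite F0.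
  by apply/setP => x; rewrite !inE andbF.
- move=> V k F v Vm Fp _ _ _ _ _ _ IH F0; have := IH F0.
  rewrite cardsU1; lia.
- by move=> *; rewrite cards0.
- move=> V k F v Vm Fp _ _ _ IH F0; have := IH F0.
  rewrite cardsU1; lia.
- move=> V k F v Vm Fp [_ _ hdeg [_ vVF hmax]] d4 ex _ F0.
  have vV : v \in V by move: vVF; rewrite inE => /andP[].
  have vF : v \notin F by move: vVF; rewrite inE => /andP[].
  have hyp : forall u, u \in V :\: (v |: F) -> deg e V u <= deg e V v.
    move=> u; rewrite !inE negb_or => /andP[/andP[_ uF] uV].
    by apply: hmax; rewrite inE uF uV.
  have h := mainA e_sym e_irr ex d4 hyp.
  have h6 := @H_step6 T e V F v vV vF ltac:(lia).
  have hge := @H_ge T e V F hdeg.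
  have hs0 : H e V F <= 2 * #|V| by rewrite F0; apply: H_set0.
  have cF : #|v |: Fp| <= 1 + #|Fp| by rewrite cardsU1; case: (v \notin Fp).
  have m : (deg e V v - 2) * (#|Fp| + 1) <= (deg e V v - 2) * (2 * #|Vm|) by nia.
  rewrite leq_pmul2l in m; last by lia.
  lia.
Qed.

Theorem mainTheorem8 (T : finType) (e : rel T)
  (e_sym : symmetric e) (e_irr : irreflexive e)
  (k : int) (Vm Fp : {set T}) :
  exec_sol e [set: T] k set0 Vm Fp -> #|Fp| <= 2 * #|Vm|.
Proof. by move=> ex; apply: (mainB e_sym e_irr ex). Qed.
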